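(* Let $\mathcal{M}$ be a II$_1$-factor with faithful normal tracial state $\tau$, $T\in\mathcal{M}$, $\nu_T$ its Brown measure, and let $\psi:[0,1]\to\overline{B_{\Vert T\Vert}}$ be Borel measurable with $\psi([0,t])$ Borel for every $t\in[0,1]$, with $Z=\{z\in\overline{B_{\Vert T\Vert}}:\psi^{-1}(z)\text{ has a minimum}\}$ Borel and $\nu_T(Z)=1$. Let $X=\{\min(\psi^{-1}(z)) : z\in Z\}\subset[0,1]$. If $b\subset[0,1]$ is Borel, then $\psi(b\cap X)$ is Borel.
   Context: $\overline{B_r}=\{z\in\mathbb{C}:|z|\le r\}$. The Brown measure $\nu_T$ is the unique Borel probability measure with $\tau(\log|T-\lambda|)=\int\log|z-\lambda|\,d\nu_T(z)$ for all $\lambda\in\mathbb{C}$. *)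

(* Defs.v *)
(* The complex plane C is modelled as R * R
   (with the product sigma-algebra of Borel sets = Borel sets of R^2). *)
From HB Require Import structures.
From mathcomp Require Import all_boot all_order all_algebra.
From mathcomp Require Import all_classical all_reals all_analysis.
Set Implicit Arguments. Unset Strict Implicit. Unset Printing Implicit Defensive.
Import Order.TTheory GRing.Theory Num.Theory.
Local Open Scope classical_set_scope.
Local Open Scope ring_scope.

Definition cball (R : realType) (r : R) : set (R * R) :=
  [set z | z.1 ^+ 2 + z.2 ^+ 2 <= r ^+ 2].

Definition is_min_preim (R : realType) (psi : R -> R * R) (z : R * R) (t : R) :=
  t \in `[0, 1] /\ psi t = z /\
  (forall s, s \in `[0, 1] -> psi s = z -> t <= s).

Definition Zset (R : realType) (r : R) (psi : R -> R * R) : set (R * R) :=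
  [set z | cball r z /\ exists t, is_min_preim psi z t].

Definition Xset (R : realType) (r : R) (psi : R -> R * R) : set R :=
  [set t | exists z, Zset r psi z /\ is_min_preim psi z t].

(* Main.v *)
Require Import Defs.
From HB Require Import structures.
From mathcomp Require Import all_boot all_order all_algebra.
From mathcomp Require Import all_classical all_reals all_analysis.
Import Order.TTheory GRing.Theory Num.Theory.
Local Open Scope classical_set_scope.
Local Open Scope ring_scope.
Section helpers.
Variables (R : realType) (r : R) (psi : R -> R * R).
Let X := Xset r psi.

Lemma X01 t : X t -> t \in `[0, 1].
Proof. by move=> [z [_ [h _]]]. Qed.

Lemma Xinj t1 t2 : X t1 -> X t2 -> psi t1 = psi t2 -> t1 = t2.
Proof.
move=> [z1 [_ [h1 [e1 m1]]]] [z2 [_ [h2 [e2 m2]]]] e.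
apply/eqP; rewrite eq_le; apply/andP; split.
- by apply: m1 => //; rewrite -e1 -e.
- by apply: m2 => //; rewrite -e2 e.
Qed.

Lemma imX : psi @` X = Zset r psi.
Proof.
apply/seteqP; split.
- by move=> _ [t [z [Zz [h [e m]]]] <-]; rewrite e.
- move=> z Zz; case: (Zz) => _ [t ht]; exists t; first by exists z.
  by case: ht => _ [].
Qed.

Lemma imD A B : psi @` ((A `\` B) `&` X) = psi @` (A `&` X) `\` psi @` (B `&` X).
Proof.
apply/seteqP; split.
- move=> _ [t [[At nBt] Xt] <-]; split; first by exists t.
  move=> [s [Bs Xs] e]; apply: nBt; by rewrite -(Xinj _ _ Xs Xt e).
- by move=> _ [[t [At Xt] <-] nB]; exists t => //; split => //; split => // Bt; apply: nB; exists t.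
Qed.
End helpers.
Arguments X01 {R r psi t}.
Arguments imX {R r psi}.
Arguments imD {R r psi}.

Theorem lemma11 (R : realType) (r : R) (hr : 0 <= r)
  (nu : probability (R * R)%type R)
  (hsupp : nu (~` cball r) = 0%E)
  (psi : R -> R * R)
  (hpsi_meas : measurable_fun (`[0, 1] : set R) psi)
  (hpsi_range : forall t, t \in `[0, 1] -> cball r (psi t))
  (hpsi_init : forall t, t \in `[0, 1] -> measurable (psi @` (`[0, t] : set R)))
  (hZ_meas : measurable (Zset r psi))
  (hZ_full : nu (Zset r psi) = 1%E) :
  forall b : set R, measurable b -> b `<=` `[0, 1] ->
    measurable (psi @` (b `&` Xset r psi)).
Proof.
move=> b mb _.
pose D := [set A : set R | measurable (psi @` (A `&` Xset r psi))].
have Dray (x : R) : D `]x, +oo[%classic.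
  rewrite /D.
  have [x0|x0] := ltP x 0.
    rewrite /D /=; suff -> : `]x, +oo[%classic `&` Xset r psi = Xset r psi by rewrite imX.
    apply/seteqP; split => [t []//|t Xt]; split => //=.
    by move: (X01 Xt); rewrite !in_itv /= andbT => /andP[t0 _]; apply: lt_le_trans t0.
  have [x1|x1] := ltP 1 x.
    rewrite /D /=; suff -> : `]x, +oo[%classic `&` Xset r psi = set0 by rewrite image_set0.
    apply/seteqP; split => [t [/= xt Xt]|//].
    move: (X01 Xt) xt; rewrite !in_itv /= andbT => /andP[_ t1] xt.
    by have := lt_le_trans (lt_le_trans x1 (ltW xt)) t1; rewrite ltxx.
  have x01 : x \in `[0, 1] by rewrite in_itv /= x0 x1.
  rewrite /D /=; suff -> : psi @` (`]x, +oo[%classic `&` Xset r psi) = Zset r psi `\` psi @` `[0, x].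
    by apply: measurableD => //; exact: hpsi_init.
  apply/seteqP; split.
  - move=> _ [t [/= xt Xt] <-]; split; first by rewrite -imX; exists t.
    move=> [s s0x e]; case: Xt => z [_ [ht [ez m]]].
    have s01 : s \in `[0, 1].
      move: s0x; rewrite /= !in_itv /= => /andP[-> sx]; exact: le_trans sx x1.
    have := m s s01 (etrans e ez); move: xt; rewrite in_itv /= andbT => xt ts.
    move: s0x; rewrite /= in_itv /= => /andP[_ sx].
    by have := lt_le_trans xt (le_trans ts sx); rewrite ltxx.
  - move=> z [Zz nz]; case: (Zz) => _ [t ht].
    have Xt : Xset r psi t by exists z.
    case: (ht) => t01 [ez _]; exists t => //; split => //=.
    rewrite in_itv /= andbT; rewrite ltNge; apply/negP => tx; apply: nz.
    exists t => //=; move: t01; rewrite !in_itv /= => /andP[-> _]; exact: tx.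
apply: (mb D); split; last first.
  move=> _ [[a c] _ <-] /=.
  have -> : `]a, c]%classic = `]a, +oo[%classic `\` `]c, +oo[%classic :> set R.
    apply/seteqP; split => t /=; rewrite !in_itv /= ?andbT.
      by move=> /andP[-> tc]; split => //; apply/negP; rewrite -leNgt.
    by move=> [-> /negP]; rewrite /= leNgt.
  rewrite /D /= imD; apply: measurableD; [exact: Dray|exact: Dray].
split.
- by rewrite /D /= set0I image_set0.
- move=> A DA; rewrite /D /= imD setTI imX; exact: measurableD.
- move=> F DF; rewrite /D /= setI_bigcupl image_bigcup; exact: bigcupT_measurable.
Qed.
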